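(* Assume $5\gamma<\tau$, where $\tau=|S_c(P,B)|$, and let $c_e$ be the cost of the user at location $\tau-5\gamma$ of $S_c(P,B)$. Then for every mediator $m\in M$, $c_m\ge c_e$.
   Context: Model: finite sets of users $P$ (costs $c(p)\ge0$), mediators $M$ (the sets $P(m)$ partition $P$), advertisers $A$ (capacity $u(a)$ a positive integer, value $v(a)\ge0$); each advertiser $a$ has $u(a)$ slots of value $v(a)$; $B$ is the set of all slots. $\gamma\ge1$ is an integer-valued or real bound with $u(a)\le\gamma$ and $|P(m)|\le\gamma$ for all $a,m$ (locations such as $\tau-5\gamma$ are assumed to be positive integers). Costs/values are compared using a fixed tie-breaking rule making them all distinct. Canonical assignment $S_c(P',B')$: order slots of $B'$ by decreasing value $b_1,b_2,\dots$ and users of $P'$ by increasing cost $p_1,p_2,\dots$; include $(p_i,b_i)$ for $i\le\min\{|P'|,|B'|\}$ iff $v(b_i)>c(p_i)$; the user at location $i$ is $p_i$. Thresholds of the Price by Removal Mechanism: for each mediator $m$, if $|S_c(P\setminus P(m),B)|>4\gamma$, $c_m$ is the cost of the user at location $|S_c(P\setminus P(m),B)|-4\gamma$ of $S_c(P\setminus P(m),B)$; otherwise $c_m=-\infty$. *)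

(* Defs.v *)
From HB Require Import structures.
From mathcomp Require Import all_boot all_order all_algebra.
From mathcomp Require Export constructive_ereal.
Set Implicit Arguments. Unset Strict Implicit. Unset Printing Implicit Defensive.
Import Order.TTheory GRing.Theory Num.Theory.
Local Open Scope ring_scope.

Section Market.
Variables (R : realDomainType) (Pu Med Adv : finType).
(* c : user costs, med : mediator of each user (P(m) = med^-1(m)),
   u : advertiser capacities, v : advertiser values *)
Variables (c : Pu -> R) (med : Pu -> Med) (u : Adv -> nat) (v : Adv -> R).

Definition slot := {a : Adv & 'I_(u a)}.
Definition slot_value (b : slot) : R := v (tag b).

Definition users_of (m : Med) : {set Pu} := [set p | med p == m].

Definition sorted_users (P' : {set Pu}) : seq Pu :=
  sort (fun p q => c p <= c q) (enum P').
Definition sorted_slots (B' : {set slot}) : seq slot :=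
  sort (fun b b' => slot_value b' <= slot_value b) (enum B').

(* canonical assignment S_c(P', B'): pairs (p_i, b_i), i <= min(|P'|,|B'|),
   kept iff v(b_i) > c(p_i) *)
Definition canonical (P' : {set Pu}) (B' : {set slot}) : seq (Pu * slot) :=
  [seq pb <- zip (sorted_users P') (sorted_slots B') | c pb.1 < slot_value pb.2].

(* cost of the user at location i (1-indexed) of S_c(P', B'), i.e. c(p_i) *)
Definition cost_at (P' : {set Pu}) (i : nat) : R :=
  nth 0 [seq c p | p <- sorted_users P'] i.-1.

(* threshold c_m of the Price by Removal Mechanism (-oo encodes -infinity) *)
Definition threshold (gamma : nat) (m : Med) : \bar R :=
  let P' := ~: users_of m in
  let n := size (canonical P' [set: slot]) in
  if (4 * gamma < n)%N then (cost_at P' (n - 4 * gamma))%:E else -oo%E.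

End Market.

(* Main.v *)
Require Import Defs.
From HB Require Import structures.
From mathcomp Require Import all_boot all_order all_algebra.
From mathcomp Require Import constructive_ereal.
From mathcomp Require Import zify.
Set Implicit Arguments. Unset Strict Implicit.
Import Order.TTheory GRing.Theory Num.Theory.
Local Open Scope ring_scope.

Lemma countG (T : Type) (a : pred T) (z : seq T) (x0 : T) i :
  (forall k, (i <= k)%N -> (k < size z)%N -> ~~ a (nth x0 z k)) -> (count a z <= i)%N.
Proof.
move=> H; rewrite -(cat_take_drop i z) count_cat.
have -> : count a (drop i z) = 0%N.
  apply/eqP; rewrite -leqn0 leqNgt -has_count; apply/(has_nthP x0) => -[k].
  rewrite size_drop nth_drop => lk; apply/negP/H; first exact: leq_addr.
  by rewrite -ltn_subRL.
by rewrite addn0 (leq_trans (count_size _ _)) // size_take; case: ltnP.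
Qed.

Lemma prefixP (T : Type) (a : pred T) (z : seq T) (x0 : T) i :
  (forall j k, (j <= k)%N -> (k < size z)%N -> a (nth x0 z k) -> a (nth x0 z j)) ->
  (i < count a z)%N -> a (nth x0 z i).
Proof.
move=> Hm Hi; apply: contraT => Hn.
suff : (count a z <= i)%N by rewrite leqNgt Hi.
apply: (@countG _ _ _ x0) => k ik kz; apply/negP => ak; apply: (negP Hn); exact: Hm ak.
Qed.

Lemma countT (T : Type) (a : pred T) (z : seq T) (x0 : T) k :
  (k <= size z)%N -> (forall i, (i < k)%N -> a (nth x0 z i)) -> (k <= count a z)%N.
Proof.
move=> kz H; rewrite -(cat_take_drop k z) count_cat.
have : count a (take k z) = k.
  have -> : count a (take k z) = size (take k z).
    apply/eqP; rewrite -all_count; apply/(all_nthP x0) => i; rewrite size_takel // => ik; rewrite nth_take //; exact: H.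
  by rewrite size_takel.
by move=> ->; apply: leq_addr.
Qed.

Section Abs.
Variable R : realDomainType.
Definition ltp (xy : R * R) := xy.1 < xy.2.

Lemma sortC (C : seq R) j k : sorted <=%R C -> (j <= k)%N -> (k < size C)%N ->
  nth 0 C j <= nth 0 C k.
Proof.
move=> sC jk kC; apply: (sorted_leq_nth le_trans lexx 0 sC) => //.
by rewrite inE (leq_ltn_trans jk kC).
Qed.

Lemma sortV (C : seq R) j k : sorted >=%R C -> (j <= k)%N -> (k < size C)%N ->
  nth 0 C k <= nth 0 C j.
Proof.
move=> sC jk kC.
have tr : transitive (fun x y : R => y <= x) by move=> a b d h1 h2; exact: le_trans h2 h1.
apply: (sorted_leq_nth tr lexx 0 sC) => //.
by rewrite inE (leq_ltn_trans jk kC).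
Qed.

Lemma cnt_nth (C : seq R) j : sorted <=%R C -> (j < size C)%N ->
  (j < count (<= nth 0 C j)%R C)%N.
Proof.
move=> sC jC; apply: (countT (x0:=0) (k:=j.+1)) => // i ij.
by rewrite /= sortC.
Qed.

Lemma abstract (C C' V : seq R) (g : nat) :
  sorted <=%R C -> sorted <=%R C' -> sorted >=%R V ->
  (forall x, (count (<= x)%R C' <= count (<= x)%R C)%N) ->
  (forall x, (count (<= x)%R C <= count (<= x)%R C' + g)%N) ->
  (size C <= size C' + g)%N -> (size C' <= size C)%N ->
  let tau := count ltp (zip C V) in
  let tau' := count ltp (zip C' V) in
  (5 * g < tau)%N ->
  (4 * g < tau')%N /\ nth 0 C (tau - 5 * g).-1 <= nth 0 C' (tau' - 4 * g).-1.
Proof.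
move=> sC sC' sV c1 c2 z1 z2 tau tau' ht.
have tz : (tau <= minn (size C) (size V))%N by rewrite -size_zip count_size.
have mono : forall j k, (j <= k)%N -> (k < size (zip C V))%N ->
    ltp (nth (0,0) (zip C V) k) -> ltp (nth (0,0) (zip C V) j).
  move=> j k jk kz; rewrite !nth_zip_cond kz (leq_ltn_trans jk kz) /ltp /=.
  rewrite size_zip leq_min in kz; case/andP: kz => kC kV.
  move=> h; apply: (le_lt_trans (sortC sC jk kC)).
  exact: (lt_le_trans h (sortV sV jk kV)).
have P1 : forall i, (i < tau)%N -> nth 0 C i < nth 0 V i /\ (i < size C)%N /\ (i < size V)%N.
  move=> i it; have := prefixP (x0:=(0,0)) mono it.
  have iz : (i < size (zip C V))%N by rewrite size_zip (leq_trans it tz).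
  rewrite nth_zip_cond iz /ltp /=; move: iz; rewrite size_zip leq_min => /andP[-> ->] //.
have tC : (tau <= size C)%N by move: tz; rewrite leq_min => /andP[].
have tV : (tau <= size V)%N by move: tz; rewrite leq_min => /andP[].
have key : forall i, (i < tau - g)%N -> (i < size C')%N /\ ltp (nth (0,0) (zip C' V) i).
  move=> i it.
  have iC' : (i < size C')%N by rewrite -(ltn_add2r g) (leq_trans _ z1) //; lia.
  split => //.
  have iz : (i < size (zip C' V))%N by rewrite size_zip leq_min iC' /=; lia.
  rewrite nth_zip_cond iz /ltp /=.
  have igt : (i + g < tau)%N by lia.
  have [h1 [h2 h3]] := P1 _ igt.
  have h4 : nth 0 C' i <= nth 0 C (i + g).
    apply: nth_count_le => //.
    rewrite -(ltn_add2r g); apply: leq_trans (c2 _); exact: cnt_nth.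
  apply: (le_lt_trans h4); apply: (lt_le_trans h1); apply: sortV => //.
  exact: leq_addr.
have t' : (tau - g <= tau')%N.
  apply: (countT (x0:=(0,0))); first rewrite size_zip leq_min; first apply/andP; first split.
  - by rewrite leq_subLR addnC (leq_trans tC z1).
  - exact: leq_trans (leq_subr g tau) tV.
  by move=> ? /key [].
split; first lia.
set j := (tau - 5 * g).-1.
have jt : (j < tau - g)%N by rewrite /j; lia.
have [jC' _] := key _ jt.
have jC : (j < size C)%N by lia.
have t'C : (tau' <= size C')%N.
  by apply: leq_trans (count_size _ _) _; rewrite size_zip geq_minl.
apply: (@le_trans _ _ (nth 0 C' j)).
  apply: nth_count_le => //.
  exact: leq_trans (cnt_nth sC' jC') (c1 _).
apply: sortC => //; rewrite /j; lia.
Qed.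
End Abs.

Lemma count_zip_map (A B X Y : Type) (f : A -> X) (h : B -> Y) (r : X -> Y -> bool)
  (s : seq A) (t : seq B) :
  count (fun ab => r (f ab.1) (h ab.2)) (zip s t) =
  count (fun xy => r xy.1 xy.2) (zip (map f s) (map h t)).
Proof. by elim: s t => [|x s IH] [|y t] //=; rewrite IH. Qed.

Lemma cnt_set (T : finType) (A : {set T}) (a : pred T) :
  count a (enum A) = #|[set x in A | a x]|.
Proof.
rewrite cardE /enum_mem size_filter count_filter; apply: eq_count => x; rewrite !inE andbC //.
Qed.

Theorem lemma9 (R : realDomainType) (Pu Med Adv : finType)
  (c : Pu -> R) (med : Pu -> Med) (u : Adv -> nat) (v : Adv -> R)
  (gamma : nat)
  (c_ge0 : forall p, 0 <= c p)
  (v_ge0 : forall a, 0 <= v a)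
  (u_gt0 : forall a, (0 < u a)%N)
  (med_surj : forall m, exists p, med p = m)
  (gamma_ge1 : (1 <= gamma)%N)
  (u_le : forall a, (u a <= gamma)%N)
  (Pm_le : forall m, (#|users_of med m| <= gamma)%N)
  (c_inj : injective c)
  (c_neq_v : forall p a, c p != v a) :
  let tau := size (canonical c v [set: Pu] [set: slot u]) in
  (5 * gamma < tau)%N ->
  let c_e := cost_at c [set: Pu] (tau - 5 * gamma) in
  forall m : Med, (c_e%:E <= threshold c med u v gamma m)%E.
Proof.
move=> tau ht c_e m.
have sizeE : forall P' : {set Pu}, size (canonical c v P' [set: slot u]) =
   count (@ltp R) (zip (map c (sorted_users c P'))
                       (map (slot_value v) (sorted_slots v [set: slot u]))).
  move=> P'; rewrite /canonical size_filter.
  exact: (count_zip_map c (slot_value v) (fun x y => x < y)).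
have cntE : forall (P' : {set Pu}) x, count (<= x)%R (map c (sorted_users c P')) =
    #|[set p in P' | c p <= x]|.
  move=> P' x; rewrite count_map /sorted_users.
  have /permP -> : perm_eq (sort (fun p q => c p <= c q) (enum P')) (enum P').
    by rewrite perm_sort.
  by rewrite cnt_set.
have sizeU : forall P' : {set Pu}, size (map c (sorted_users c P')) = #|P'|.
  by move=> P'; rewrite size_map size_sort cardE.
have sortU : forall P' : {set Pu}, sorted <=%R (map c (sorted_users c P')).
  move=> P'; rewrite sorted_map; apply: sort_sorted => p q; exact: le_total.
have sortS : sorted >=%R (map (slot_value v) (sorted_slots v [set: slot u])).
  rewrite sorted_map; apply: sort_sorted => p q; exact: le_total.
set U := users_of med m.
have hU := Pm_le m.
have := @abstract R (map c (sorted_users c [set: Pu])) (map c (sorted_users c (~: U)))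
   (map (slot_value v) (sorted_slots v [set: slot u])) gamma (sortU _) (sortU _) sortS.
case.
- move=> x; rewrite !cntE; apply: subset_leq_card; apply/subsetP => p; rewrite !inE.
  by case/andP => _ ->.
- move=> x; rewrite !cntE.
  apply: (@leq_trans #|[set p in ~: U | c p <= x] :|: U|); last first.
    by apply: leq_trans (leq_card_setU _ _) _; rewrite leq_add2l.
  apply: subset_leq_card; apply/subsetP => p; rewrite !inE /= => ->;
  by rewrite andbT; case: (med p == m).
- rewrite !sizeU; have := cardsC U; rewrite cardsT; move=> H; rewrite -H addnC leq_add2l; exact: hU.
- by rewrite !sizeU; apply: subset_leq_card; apply/subsetP => p; rewrite !inE.
- by rewrite -sizeE.
move=> h1 h2.
rewrite /threshold /= sizeE h1 lee_fin.
by rewrite /c_e /cost_at /tau sizeE.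
Qed.
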